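(* Let $(T,\eta,\mu)$ be a monad on $\mathbf{Set}$, $L\dashv R$ the free–forgetful adjunction with $LX=(TX,\mu_X)$, $F\colon\mathbf{Set}\to\mathbf{Set}$ a functor with distributive law $\zeta\colon TF\Rightarrow FT$ and lifting $\tilde F(A,a)=(FA,Fa\circ\zeta_A)$, $c\colon X\to FTX$ a coalgebra with $c^\#=F\mu_X\circ\zeta_{TX}\circ Tc$. Let $\Psi\colon\mathbf{Set}^{\mathrm{op}}\to\mathbf{Pos}$ have fibres with all meets preserved by reindexing, fix a $T$-algebra $(\Omega,o)$ and $d_\Omega\in\Psi\Omega$. For a $T$-algebra $A$ let $\alpha_A(S)=\bigwedge_{k\in S}\Psi(Rk)(d_\Omega)$ for $S\subseteq\mathrm{Alg}(T)(A,(\Omega,o))$, $\gamma_A(d)=\{k\mid d\preceq\Psi(Rk)(d_\Omega)\}$, $\mathrm{cl}_A=\gamma_A\circ\alpha_A$. Let $(\mathit{ev}_\lambda\colon\tilde F(\Omega,o)\to(\Omega,o))_{\lambda\in\Lambda}$ be $T$-algebra homomorphisms, $\Lambda_A(S)=\{\mathit{ev}_\lambda\circ\tilde Fh\mid\lambda\in\Lambda,h\in S\}$, $\mathcal{K}_A=\alpha_{\tilde FA}\circ\Lambda_A\circ\gamma_A$, and assume $\Lambda_{LX}(\mathrm{cl}_{LX}(S))\subseteq\mathrm{cl}_{\tilde FLX}(\Lambda_{LX}(S))$ for all $S$. Let $\alpha'_X$ be the direct image of the map $\mathbf{Set}(X,\Omega)\to\mathrm{Alg}(T)(LX,(\Omega,o))$,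 $h\mapsto o\circ Th$. Fix a set $\Theta$ of constants, each $\theta\in\Theta$ given a map $\llbracket\theta\rrbracket\colon X\to\Omega$, put $\Theta'_X=\{\llbracket\theta\rrbracket\mid\theta\in\Theta\}$ and $\Theta_{LX}=\alpha'_X(\Theta'_X)$. Consider formulas $\varphi::=\theta\mid[\lambda]\varphi$ ($\theta\in\Theta,\lambda\in\Lambda$) with semantics $\llbracket[\lambda]\varphi\rrbracket=\mathit{ev}_\lambda\circ Fo\circ FT\llbracket\varphi\rrbracket\circ c$. Let $\mathrm{be}_{LX}(d)=\Psi(Rc^\#)(\mathcal{K}_{LX}(d))\wedge\alpha_{LX}(\Theta_{LX})$ on $\Psi(TX)$. Then the logic is expressive for $\mathrm{be}_{LX}$: $\alpha_{LX}\big(\alpha'_X(\{\llbracket\varphi\rrbracket\mid\varphi\text{ a formula}\})\big)=\nu\,\mathrm{be}_{LX}$.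
   Context: $\nu\,\mathrm{be}_{LX}$ is the greatest fixpoint of $\mathrm{be}_{LX}$ w.r.t. $\preceq$ in the complete lattice $\Psi(TX)$. A distributive law satisfies $\zeta_X\circ\eta_{FX}=F\eta_X$ and $\zeta_X\circ\mu_{FX}=F\mu_X\circ\zeta_{TX}\circ T\zeta_X$. *)

(* Defs.v *)
Record Monad := {
  T : Type -> Type;
  Tmap : forall A B : Type, (A -> B) -> T A -> T B;
  eta : forall A : Type, A -> T A;
  mu : forall A : Type, T (T A) -> T A;
  Tmap_id : forall A (x : T A), Tmap _ _ (fun a => a) x = x;
  Tmap_comp : forall A B C (f : A -> B) (g : B -> C) (x : T A),
    Tmap _ _ (fun a => g (f a)) x = Tmap _ _ g (Tmap _ _ f x);
  eta_nat : forall A B (f : A -> B) (a : A), Tmap _ _ f (eta _ a) = eta _ (f a);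
  mu_nat : forall A B (f : A -> B) (x : T (T A)),
    Tmap _ _ f (mu _ x) = mu _ (Tmap _ _ (Tmap _ _ f) x);
  mu_eta_l : forall A (x : T A), mu _ (eta _ x) = x;
  mu_eta_r : forall A (x : T A), mu _ (Tmap _ _ (eta A) x) = x;
  mu_assoc : forall A (x : T (T (T A))), mu _ (mu _ x) = mu _ (Tmap _ _ (mu A) x)
}.
Arguments Tmap {m A B} f x.
Arguments eta {m A} a.
Arguments mu {m A} x.

Record Functor := {
  Fo : Type -> Type;
  Fmap : forall A B : Type, (A -> B) -> Fo A -> Fo B;
  Fmap_id : forall A (x : Fo A), Fmap _ _ (fun a => a) x = x;
  Fmap_comp : forall A B C (f : A -> B) (g : B -> C) (x : Fo A),
    Fmap _ _ (fun a => g (f a)) x = Fmap _ _ g (Fmap _ _ f x)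
}.
Arguments Fmap {f A B} _ _ : rename.

Record DistrLaw (M : Monad) (Fn : Functor) := {
  zeta : forall A : Type, T M (Fo Fn A) -> Fo Fn (T M A);
  zeta_nat : forall A B (f : A -> B) (x : T M (Fo Fn A)),
    zeta _ (Tmap (Fmap f) x) = Fmap (Tmap f) (zeta _ x);
  zeta_eta : forall A (x : Fo Fn A), zeta _ (eta x) = Fmap (@eta M A) x;
  zeta_mu : forall A (x : T M (T M (Fo Fn A))),
    zeta _ (mu x) = Fmap (@mu M A) (zeta _ (Tmap (zeta A) x))
}.
Arguments zeta {M Fn} d {A} x.

Set Implicit Arguments.
Unset Strict Implicit.

Definition IsAlg (M : Monad) (A : Type) (a : T M A -> A) : Prop :=
  (forall x : A, a (eta x) = x) /\
  (forall x : T M (T M A), a (Tmap a x) = a (mu x)).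

Definition IsAlgHom (M : Monad) (A B : Type) (a : T M A -> A) (b : T M B -> B)
  (f : A -> B) : Prop :=
  forall x : T M A, f (a x) = b (Tmap f x).

(** Structure map of the lifting  F~(A,a) = (FA, Fa o zeta_A). *)
Definition Flift (M : Monad) (Fn : Functor) (z : DistrLaw M Fn) (A : Type)
  (a : T M A -> A) : T M (Fo Fn A) -> Fo Fn A :=
  fun x => Fmap a (zeta z x).

Unset Implicit Arguments.
Record Fibration := {
  P : Type -> Type;
  le : forall X : Type, P X -> P X -> Prop;
  le_refl : forall X (x : P X), le _ x x;
  le_trans : forall X (x y z : P X), le _ x y -> le _ y z -> le _ x z;
  le_antisym : forall X (x y : P X), le _ x y -> le _ y x -> x = y;
  meet : forall X : Type, (P X -> Prop) -> P X;
  meet_lb : forall X (S : P X -> Prop) x, S x -> le _ (meet _ S) x;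
  meet_glb : forall X (S : P X -> Prop) y,
    (forall x, S x -> le _ y x) -> le _ y (meet _ S);
  reindex : forall X Y : Type, (X -> Y) -> P Y -> P X;
  reindex_mono : forall X Y (f : X -> Y) (d e : P Y),
    le _ d e -> le _ (reindex _ _ f d) (reindex _ _ f e);
  reindex_id : forall X (d : P X), reindex _ _ (fun x => x) d = d;
  reindex_comp : forall X Y Z (f : X -> Y) (g : Y -> Z) (d : P Z),
    reindex _ _ (fun x => g (f x)) d = reindex _ _ f (reindex _ _ g d);
  reindex_meet : forall X Y (f : X -> Y) (S : P Y -> Prop),
    reindex _ _ f (meet _ S) = meet _ (fun d => exists e, S e /\ d = reindex _ _ f e)
}.
Arguments le {f X} _ _ : rename.
Arguments meet {f X} _ : rename.
Arguments reindex {f X Y} _ _ : rename.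
Set Implicit Arguments.

Definition binmeet (Ps : Fibration) (X : Type) (a b : P Ps X) : P Ps X :=
  meet (fun d => d = a \/ d = b).

(** Subsets of Alg(T)(A,(Omega,o)) are represented as predicates on the
    underlying maps A -> Omega (only homomorphisms are ever put in them). *)
Section Galois.
Variables (M : Monad) (Ps : Fibration) (Omega : Type) (o : T M Omega -> Omega)
  (dOmega : P Ps Omega).

Definition alphaA (A : Type) (S : (A -> Omega) -> Prop) : P Ps A :=
  meet (fun d => exists k, S k /\ d = reindex k dOmega).

Definition gammaA (A : Type) (a : T M A -> A) (d : P Ps A) : (A -> Omega) -> Prop :=
  fun k => IsAlgHom a o k /\ le d (reindex k dOmega).

Definition clA (A : Type) (a : T M A -> A) (S : (A -> Omega) -> Prop)
  : (A -> Omega) -> Prop := gammaA a (alphaA S).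
End Galois.

Section Logic.
Variables (M : Monad) (Fn : Functor) (z : DistrLaw M Fn) (Ps : Fibration)
  (Omega : Type) (o : T M Omega -> Omega) (dOmega : P Ps Omega)
  (Lam : Type) (ev : Lam -> Fo Fn Omega -> Omega).

Definition LambdaA (A : Type) (S : (A -> Omega) -> Prop) : (Fo Fn A -> Omega) -> Prop :=
  fun g => exists (l : Lam) (h : A -> Omega), S h /\ g = (fun y => ev l (Fmap h y)).

Definition KA (A : Type) (a : T M A -> A) (d : P Ps A) : P Ps (Fo Fn A) :=
  alphaA dOmega (LambdaA (gammaA o dOmega a d)).

Definition alpha' (X : Type) (S : (X -> Omega) -> Prop) : (T M X -> Omega) -> Prop :=
  fun g => exists h : X -> Omega, S h /\ g = (fun t => o (Tmap h t)).

Definition csharp (X : Type) (c : X -> Fo Fn (T M X)) : T M X -> Fo Fn (T M X) :=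
  fun t => Fmap (@mu M X) (zeta z (Tmap c t)).

Variables (Theta : Type) (X : Type) (c : X -> Fo Fn (T M X)) (cst : Theta -> X -> Omega).

Inductive formula : Type :=
| fConst : Theta -> formula
| fBox : Lam -> formula -> formula.

Fixpoint sem (phi : formula) : X -> Omega :=
  match phi with
  | fConst th => cst th
  | fBox l psi => fun x => ev l (Fmap o (Fmap (Tmap (sem psi)) (c x)))
  end.

Definition ThetaLX : (T M X -> Omega) -> Prop :=
  alpha' (fun h => exists th : Theta, h = cst th).

Definition be (d : P Ps (T M X)) : P Ps (T M X) :=
  binmeet (reindex (csharp c) (KA (@mu M X) d)) (alphaA dOmega ThetaLX).
End Logic.

Definition IsGreatestFixpoint (Ps : Fibration) (Y : Type) (f : P Ps Y -> P Ps Y)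
  (v : P Ps Y) : Prop :=
  f v = v /\ (forall y, f y = y -> le y v).

(* Main.v *)
Require Import Defs.
From Stdlib Require Import FunctionalExtensionality.

Section Aux.
Variables (M : Monad) (Fn : Functor) (z : DistrLaw M Fn) (Ps : Fibration)
  (Omega : Type) (o : T M Omega -> Omega) (Ho : IsAlg o)
  (dOmega : P Ps Omega)
  (Lam : Type) (ev : Lam -> Fo Fn Omega -> Omega)
  (Hev : forall l : Lam, IsAlgHom (Flift z o) o (ev l))
  (X : Type) (c : X -> Fo Fn (T M X))
  (Theta : Type) (cst : Theta -> X -> Omega).

Lemma free_hom (Y : Type) (h : Y -> Omega) :
  IsAlgHom (@mu M Y) o (fun t => o (Tmap h t)).
Proof.
  intro x. simpl. rewrite mu_nat. rewrite <- (proj2 Ho).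
  rewrite <- Tmap_comp. reflexivity.
Qed.

Lemma box_eq (phi : formula Lam Theta) (l : Lam) :
  (fun t => o (Tmap (sem o ev c cst (fBox l phi)) t)) =
  (fun t => ev l (Fmap (fun u => o (Tmap (sem o ev c cst phi) u)) (csharp z c t))).
Proof.
  apply functional_extensionality; intro t. simpl.
  set (h := sem o ev c cst phi).
  rewrite (Tmap_comp M _ _ _ (fun x : X => Fmap o (Fmap (Tmap h) (c x))) (ev l)).
  rewrite <- (Hev l). unfold Flift, csharp.
  rewrite (Tmap_comp M _ _ _ (fun x : X => Fmap (Tmap h) (c x)) (Fmap o)).
  rewrite (Tmap_comp M _ _ _ c (Fmap (Tmap h))).
  rewrite !zeta_nat.
  rewrite <- !Fmap_comp. f_equal. f_equal.
  apply functional_extensionality; intro w.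
  rewrite (proj2 Ho). rewrite mu_nat. reflexivity.
Qed.

Lemma alpha_lb (A : Type) (S : (A -> Omega) -> Prop) k :
  S k -> le (alphaA dOmega S) (reindex k dOmega).
Proof. intro H. apply meet_lb. exists k. auto. Qed.

Lemma alpha_anti (A : Type) (S S' : (A -> Omega) -> Prop) :
  (forall k, S k -> S' k) -> le (alphaA dOmega S') (alphaA dOmega S).
Proof.
  intro H. apply meet_glb. intros x [k [Hk ->]]. apply alpha_lb. auto.
Qed.

Lemma alpha_cl (A : Type) (a : T M A -> A) (S : (A -> Omega) -> Prop) :
  le (alphaA dOmega S) (alphaA dOmega (clA o dOmega a S)).
Proof.
  apply meet_glb. intros x [k [[_ Hk] ->]]. exact Hk.
Qed.

Definition Dset : (T M X -> Omega) -> Prop :=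
  alpha' o (fun h => exists phi : formula Lam Theta, h = sem o ev c cst phi).

Lemma D_hom k : Dset k -> IsAlgHom (@mu M X) o k.
Proof. intros [h [_ ->]]. apply free_hom. Qed.

Lemma D_sem (phi : formula Lam Theta) : Dset (fun t => o (Tmap (sem o ev c cst phi) t)).
Proof. exists (sem o ev c cst phi). split; [exists phi|]; reflexivity. Qed.

Lemma be_le_const (y : P Ps (T M X)) th :
  le (be z o dOmega ev c cst y) (reindex (fun t => o (Tmap (sem o ev c cst (fConst Lam th)) t)) dOmega).
Proof.
  eapply le_trans. apply meet_lb. right; reflexivity.
  apply alpha_lb. exists (cst th). split; [exists th|]; reflexivity.
Qed.

Lemma be_le_box (y : P Ps (T M X)) l psi :
  le y (reindex (fun t => o (Tmap (sem o ev c cst psi) t)) dOmega) ->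
  le (be z o dOmega ev c cst y) (reindex (fun t => o (Tmap (sem o ev c cst (fBox l psi)) t)) dOmega).
Proof.
  intro IH.
    eapply le_trans. apply meet_lb. left; reflexivity.
    rewrite box_eq.
    set (k := fun u => o (Tmap (sem o ev c cst psi) u)).
    rewrite (reindex_comp Ps _ _ _ (csharp z c) (fun w => ev l (Fmap k w))). apply reindex_mono.
    apply alpha_lb. exists l, k. split; [|reflexivity].
    split. apply free_hom. apply IH.
Qed.

End Aux.

Theorem corollary1
  (M : Monad) (Fn : Functor) (z : DistrLaw M Fn) (Ps : Fibration)
  (Omega : Type) (o : T M Omega -> Omega) (Ho : IsAlg o)
  (dOmega : P Ps Omega)
  (Lam : Type) (ev : Lam -> Fo Fn Omega -> Omega)
  (Hev : forall l : Lam, IsAlgHom (Flift z o) o (ev l))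
  (X : Type) (c : X -> Fo Fn (T M X))
  (Hcl : forall S : (T M X -> Omega) -> Prop,
     (forall k, S k -> IsAlgHom (@mu M X) o k) ->
     forall g, LambdaA ev (clA o dOmega (@mu M X) S) g ->
       clA o dOmega (Flift z (@mu M X)) (LambdaA ev S) g)
  (Theta : Type) (cst : Theta -> X -> Omega) :
  IsGreatestFixpoint
    (be z o dOmega ev c cst)
    (alphaA dOmega (alpha' o (fun h => exists phi : formula Lam Theta, h = sem o ev c cst phi))).
Proof.
  set (D := alpha' o (fun h => exists phi : formula Lam Theta, h = sem o ev c cst phi)).
  set (v := alphaA dOmega D).
  assert (Hv : forall psi, le v (reindex (fun t => o (Tmap (sem o ev c cst psi) t)) dOmega)).
  { intro psi. apply alpha_lb. apply D_sem. }
  split.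
  - apply le_antisym.
    + apply meet_glb. intros x [k [[h [[phi ->] ->]] ->]].
      destruct phi; [apply be_le_const | apply be_le_box; auto].
    + apply meet_glb. intros x [-> | ->].
      * eapply le_trans.
        2:{ apply reindex_mono. unfold KA.
            apply alpha_anti. apply Hcl. intros k Hk. eapply D_hom; eauto. }
        eapply le_trans.
        2:{ apply reindex_mono. apply alpha_cl. }
        unfold alphaA; rewrite reindex_meet.
        apply meet_glb. intros x [e [[k [[l [h [[h0 [[phi ->] ->]] ->]]] ->]] ->]].
        rewrite <- reindex_comp.
        rewrite <- box_eq; auto.
      * apply alpha_anti. intros k [h [[th ->] ->]].
        exists (cst th). split; [exists (fConst Lam th)|]; reflexivity.
  - intros y Hy.
    assert (Hi : forall psi, le y (reindex (fun t => o (Tmap (sem o ev c cst psi) t)) dOmega)).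
    { induction psi; rewrite <- Hy.
      - apply be_le_const.
      - apply be_le_box; auto. }
    apply meet_glb. intros x [k [[h [[phi ->] ->]] ->]]. apply Hi.
Qed.
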